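(* Let $k\ge 2$, let $H$ be a triangle-free $k$-regular graph, and let $G=\overline{L(H)}$ be the complement of the line graph of $H$. Then the following are equivalent: $G$ is localizable; $G$ is $k$-localizable; $\chi'(H)=k$.
   Context: A clique is strong if it intersects every maximal independent set. A graph is localizable if its vertex set admits a partition into strong cliques, and $k$-localizable if it admits a partition into exactly $k$ strong cliques. $L(H)$ is the line graph of $H$ (vertex set $E(H)$, edges adjacent iff sharing an endpoint). $\chi'(H)$ is the chromatic index of $H$ (minimum number of matchings whose union is $E(H)$). *)

(* Defs.v *)
From mathcomp Require Import all_boot.
Set Implicit Arguments. Unset Strict Implicit. Unset Printing Implicit Defensive.

Definition simple_graph (T : finType) (g : rel T) : Prop :=
  symmetric g /\ irreflexive g.

Section Graphs.
Variable T : finType.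
Variable g : rel T.

Definition is_clique (C : {set T}) : bool :=
  [forall x in C, forall y in C, (x != y) ==> g x y].

Definition is_independent (S : {set T}) : bool :=
  [forall x in S, forall y in S, (x != y) ==> ~~ g x y].

Definition is_maximal_independent (S : {set T}) : bool :=
  maxset is_independent S.

Definition strong_clique (C : {set T}) : Prop :=
  is_clique C /\
  forall S : {set T}, is_maximal_independent S -> C :&: S != set0.

Definition strong_clique_partition (P : {set {set T}}) : Prop :=
  partition P [set: T] /\ forall C, C \in P -> strong_clique C.

Definition localizable : Prop :=
  exists P : {set {set T}}, strong_clique_partition P.

Definition k_localizable (k : nat) : Prop :=
  exists P : {set {set T}}, strong_clique_partition P /\ #|P| = k.

Definition compl_graph : rel T := fun x y => (x != y) && ~~ g x y.

Definition regular (k : nat) : Prop := forall v : T, #|[set w | g v w]| = k.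

Definition triangle_free : Prop :=
  forall x y z : T, ~ [&& g x y, g y z & g x z].

Definition edge_set : {set {set T}} :=
  [set [set x; y] | x in T, y in T & g x y].

Definition edge_type := {e : {set T} | e \in edge_set}.

Definition line_graph : rel edge_type :=
  fun e f => (e != f) && ~~ [disjoint val e & val f].

Definition edge_colorable (c : nat) : bool :=
  [exists f : {ffun edge_type -> 'I_c},
    [forall e : edge_type, forall e' : edge_type,
       line_graph e e' ==> (f e != f e')]].

Lemma edge_colorable_card : edge_colorable #|{: edge_type}|.
Proof.
apply/existsP; exists [ffun e => enum_rank e].
apply/forallP => e; apply/forallP => e'; apply/implyP => /andP[ne _].
by rewrite !ffunE; apply: contra ne => /eqP/enum_rank_inj ->.
Qed.

Lemma edge_colorable_exists : exists c, edge_colorable c.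
Proof. by exists #|{: edge_type}|; exact: edge_colorable_card. Qed.

Definition chromatic_index : nat := ex_minn edge_colorable_exists.

End Graphs.

Arguments line_graph {T} g.
Arguments edge_type {T} g.
Arguments edge_set {T} g.
Arguments edge_colorable {T} g c.
Arguments chromatic_index {T} g.

(* Main.v *)
Require Import Defs.
From mathcomp Require Import all_boot.
Set Implicit Arguments. Unset Strict Implicit. Unset Printing Implicit Defensive.

Section S.
Variable V : finType.
Variable adj : rel V.
Hypothesis sg : simple_graph adj.
Hypothesis tf : triangle_free adj.

Local Notation E := (edge_type adj).
Local Notation G := (compl_graph (line_graph adj)).

Lemma edgeP (e : E) : exists a b, adj a b /\ val e = [set a; b].
Proof.
case: e => /= x H. case/imset2P: H => a b ha hb ex.
move: hb; rewrite inE => /andP[_ hab].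
by exists a, b.
Qed.

Lemma mk_edge_in a b : adj a b -> [set a; b] \in edge_set adj.
Proof. by move=> h; apply/imset2P; apply: (Imset2spec (x1:=a) (x2:=b)) => //; rewrite inE. Qed.

Definition star v := [set e : E | v \in val e].

Lemma GE (e f : E) : G e f = (e != f) && [disjoint val e & val f].
Proof. by rewrite /compl_graph /line_graph; case: (e =P f) => //= _; rewrite negbK. Qed.


Lemma irr a : ~~ adj a a.
Proof. by case: sg => _ /(_ a) ->. Qed.

Lemma symm a b : adj a b = adj b a.
Proof. by case: sg => h _; rewrite h. Qed.

Lemma meet_ex (A B : {set V}) : ~~ [disjoint A & B] -> exists z, z \in A /\ z \in B.
Proof. by rewrite -setI_eq0 => /set0Pn[z]; rewrite inE => /andP[h1 h2]; exists z. Qed.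

Lemma edge_at (f : E) b : b \in val f -> exists c, adj b c /\ val f = [set b; c].
Proof.
case: (edgeP f) => a [c [hac ->]]; rewrite in_set2 => /orP[]/eqP->.
  by exists c.
by exists a; rewrite symm setUC.
Qed.

Definition mke a b (h : adj a b) : E := exist _ [set a; b] (mk_edge_in h).

Lemma star_indep v : is_independent G (star v).
Proof.
apply/forallP=> x; apply/implyP=> hx; apply/forallP=> y; apply/implyP=> hy.
apply/implyP=> nxy; rewrite GE nxy /=; rewrite /star !inE in hx hy.
by apply/negP => /disjointFr/(_ hx); rewrite hy.
Qed.

Lemma indepP S x y : is_independent G S -> x \in S -> y \in S -> x != y ->
  ~~ [disjoint val x & val y].
Proof.
move=> /forallP/(_ x)/implyP h hx hy nxy.
move: h => /(_ hx)/forallP/(_ y)/implyP/(_ hy)/implyP/(_ nxy).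
by rewrite GE nxy.
Qed.

Lemma cliqueP C x y : is_clique G C -> x \in C -> y \in C -> x != y ->
  [disjoint val x & val y].
Proof.
move=> /forallP/(_ x)/implyP h hx hy nxy.
move: h => /(_ hx)/forallP/(_ y)/implyP/(_ hy)/implyP/(_ nxy).
by rewrite GE nxy.
Qed.

Lemma clique_one C v e e' : is_clique G C -> e \in C -> e' \in C ->
  v \in val e -> v \in val e' -> e = e'.
Proof.
move=> hC he he' hv hv'; apply/eqP/negP => /negP ne.
by move: (cliqueP hC he he' ne) => /disjointFr/(_ hv); rewrite hv'.
Qed.

Lemma meet_other v w (e : E) : v \notin val e -> ~~ [disjoint [set v; w] & val e] ->
  w \in val e.
Proof.
move=> hv /meet_ex[z [hz hze]]; move: hz; rewrite in_set2 => /orP[]/eqP hz; subst z => //.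
by rewrite hze in hv.
Qed.

Lemma star_max k v : 2 <= k -> regular adj k -> is_maximal_independent G (star v).
Proof.
move=> hk reg; apply/maxsetP; split; first exact: star_indep.
move=> B hB sB; apply/eqP; rewrite eqEsubset sB andbT; apply/subsetP => e he.
rewrite /star inE; apply/negPn/negP => hve.
have hw : forall w, adj v w -> w \in val e.
  move=> w hw; have hs : mke hw \in B by apply: (subsetP sB); rewrite /star inE /= setU11.
  apply: (meet_other hve); apply: (indepP hB hs he).
  by apply/negP => /eqP eq; rewrite -eq /= setU11 in hve.
have : 1 < #|[set w | adj v w]| by rewrite reg.
case/card_gt1P => w1 [w2 []]; rewrite !inE => h1 h2 n12.
case: (edgeP e) => a [b [hab ea]].
move: (hw _ h1) (hw _ h2); rewrite ea !in_set2.
move=> /orP[]/eqP e1 /orP[]/eqP e2; subst w1 w2; rewrite ?eqxx // in n12.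
  by apply: (tf (x:=v) (y:=a) (z:=b)); rewrite h1 hab h2.
by apply: (tf (x:=v) (y:=a) (z:=b)); rewrite h1 hab h2.
Qed.


Lemma sub_star S (v0 : V) : is_independent G S -> exists v, S \subset star v.
Proof.
move=> hS; case: (set_0Vmem S) => [->|[e he]]; first by exists v0; exact: sub0set.
case: (edgeP e) => a [b [hab ea]].
case: (boolP (S \subset star a)) => [h|]; first by exists a.
case/subsetPn => f hf; rewrite /star inE => haf.
have nfe : e != f by apply/negP => /eqP eq; rewrite -eq ea setU11 in haf.
have hbf : b \in val f.
  by apply: (meet_other haf); rewrite -ea; apply: (indepP hS he hf nfe).
exists b; apply/subsetP => h hh; rewrite /star inE; apply/negPn/negP => hbh.
have neh : e != h by apply/negP => /eqP eq; rewrite -eq ea !inE eqxx orbT in hbh.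
have hah : a \in val h.
  apply: (meet_other hbh); rewrite setUC -ea; apply: (indepP hS he hh neh).
have nfh : f != h by apply/negP => /eqP eq; rewrite -eq hbf in hbh.
case: (edge_at hbf) => c [hbc fc].
case: (edge_at hah) => d [had hd].
case/meet_ex: (indepP hS hf hh nfh) => z []; rewrite fc hd !in_set2.
case/orP => /eqP ->.
  by move=> hz; rewrite hd !in_set2 hz in hbh.
case/orP => /eqP ecd.
  by rewrite fc ecd !in_set2 eqxx orbT in haf.
subst d; apply: (tf (x:=a) (y:=b) (z:=c)); by rewrite hab hbc had.
Qed.

Lemma maxind_is_star S (v0 : V) : is_maximal_independent G S -> exists v, S = star v.
Proof.
case/maxsetP => hS hmax; case: (sub_star v0 hS) => v hv; exists v.
by apply: esym; apply: hmax => //; exact: star_indep.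
Qed.

Lemma strong_iff k (v0 : V) C : 2 <= k -> regular adj k ->
  strong_clique G C <-> is_clique G C /\ forall v, exists2 e, e \in C & v \in val e.
Proof.
move=> hk reg; split.
  case=> hC hS; split => // v.
  case/set0Pn: (hS _ (star_max v hk reg)) => e; rewrite inE => /andP[h1 h2].
  by exists e; rewrite /star inE in h2.
case=> hC hcov; split => // S /(maxind_is_star v0)[v ->].
case: (hcov v) => e he hve; apply/set0Pn; exists e; by rewrite inE he /star inE.
Qed.

Lemma card_star k v : regular adj k -> #|star v| = k.
Proof.
move=> reg; rewrite -(reg v) -(card_imset _ val_inj).
have -> : [set val e | e in star v] = [set [set v; w] | w in [set w | adj v w]].
  apply/setP => x; apply/imsetP/imsetP.
    case=> e; rewrite /star inE => hv ->.
    case: (edge_at hv) => w [hw ->]; exists w => //; by rewrite inE.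
  case=> w; rewrite inE => hw ->; exists (mke hw) => //.
  by rewrite /star !inE eqxx.
apply: card_in_imset => w w'; rewrite !inE => hw hw' eq.
have : w' \in [set v; w] by rewrite eq !inE eqxx orbT.
rewrite in_set2 => /orP[]/eqP // ew'; by rewrite ew' (negbTE (irr v)) in hw'.
Qed.


Lemma count_P k P (v0 : V) : 2 <= k -> regular adj k ->
  strong_clique_partition G P -> #|P| = k.
Proof.
move=> hk reg [hP hstr].
case/and3P: hP => /eqP hcov htriv h0.
have hcovE e : e \in cover P by rewrite hcov inE.
rewrite -(card_star v0 reg).
have -> : P = pblock P @: star v0.
  apply/setP => C; apply/idP/imsetP.
    move=> hC; case: (strong_iff v0 C hk reg) => /(_ (hstr C hC)) [_ /(_ v0)[e he hve]] _.
    exists e; first by rewrite /star inE.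
    by rewrite (def_pblock htriv hC he).
  case=> e _ ->; exact: pblock_mem.
apply: card_in_imset => e e'; rewrite /star !inE => he he' eq.
have hC := pblock_mem (hcovE e).
case: (strong_iff v0 (pblock P e) hk reg) => /(_ (hstr _ hC)) [hcl _] _.
apply: (clique_one hcl _ _ he he'); first by rewrite mem_pblock.
by rewrite eq mem_pblock.
Qed.

Lemma chrom_lb k c (v0 : V) : regular adj k -> edge_colorable adj c -> k <= c.
Proof.
move=> reg /existsP[f /forallP hf].
rewrite -(card_star v0 reg) -(card_in_imset (f:=f)); last first.
  move=> e e'; rewrite /star !inE => he he' eq; apply/eqP/negP => /negP ne.
  move: (hf e) => /forallP/(_ e')/implyP H.
  have : f e != f e'.
    apply: H; rewrite /line_graph ne /=.
    by apply/negP => /disjointFr/(_ he); rewrite he'.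
  by rewrite eq eqxx.
by apply: leq_trans (max_card _) _; rewrite card_ord.
Qed.

Lemma chrom_iff k (v0 : V) : regular adj k ->
  (chromatic_index adj = k <-> edge_colorable adj k).
Proof.
move=> reg; rewrite /chromatic_index; case: ex_minnP => m hm hmin; split.
  by move=> <-.
move=> hk; apply/eqP; rewrite eqn_leq hmin //=; exact: (chrom_lb v0 reg hm).
Qed.

Lemma col_of_part k P (v0 : V) : 2 <= k -> regular adj k ->
  strong_clique_partition G P -> #|P| = k -> edge_colorable adj k.
Proof.
move=> hk reg hsp hPk; case: (hsp) => hP hstr.
case/and3P: hP => /eqP hcov htriv h0.
have hcovE e : e \in cover P by rewrite hcov inE.
move: hk reg hPk; case: k => [|[|n]] // hk reg hPk.
apply/existsP; exists [ffun e => inord (index (pblock P e) (enum P))].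
apply/forallP => e; apply/forallP => e'; apply/implyP => /andP[ne hmeet].
rewrite !ffunE; apply/negP => /eqP /(congr1 val).
have hi x : index (pblock P x) (enum P) < n.+2.
  by rewrite -hPk cardE index_mem mem_enum pblock_mem.
rewrite /= !inordK ?hi // => eqi.
have eqb : pblock P e = pblock P e'.
  by apply: (index_inj (pblock P e) _ _ eqi); rewrite mem_enum pblock_mem.
have hC := pblock_mem (hcovE e).
case: (strong_iff v0 (pblock P e) hk reg) => /(_ (hstr _ hC)) [hcl _] _.
have he : e \in pblock P e by rewrite mem_pblock.
have he' : e' \in pblock P e by rewrite eqb mem_pblock.
by move: (cliqueP hcl he he' ne); rewrite (negbTE hmeet).
Qed.

Lemma part_of_col k (v0 : V) : 2 <= k -> regular adj k -> edge_colorable adj k ->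
  exists P, strong_clique_partition G P.
Proof.
move=> hk reg /existsP[f /forallP hf].
have proper e e' : f e = f e' -> ~~ line_graph adj e e'.
  move=> eq; apply/negP => hl; move: (hf e) => /forallP/(_ e')/implyP/(_ hl).
  by rewrite eq eqxx.
have hP := preim_partitionP f [set: E].
exists (preim_partition f [set: E]); split => // C hC.
have hR : {in [set: E] & &, equivalence_rel (fun x y => f x == f y)}.
  by move=> x y z _ _ _; split; [exact: eqxx | move/eqP->].
case/and3P: (hP) => /eqP hcov htriv h0.
have [x hx] : exists x, x \in C.
  by apply/set0Pn; apply: contraNneq h0 => <-.
have hCx : C = pblock (preim_partition f [set: E]) x by rewrite (def_pblock htriv hC hx).
have memC y : (y \in C) = (f x == f y).
  by rewrite hCx (pblock_equivalence_partition hR) ?inE.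
apply/(strong_iff v0 C hk reg); split.
  apply/forallP => y; apply/implyP => hy; apply/forallP => y'; apply/implyP => hy'.
  apply/implyP => ny; rewrite /compl_graph ny /=; apply: proper.
  by rewrite memC in hy; rewrite memC in hy'; rewrite -(eqP hy) -(eqP hy').
move=> v.
have himg : f @: star v = [set: 'I_k].
  apply/eqP; rewrite eqEcard subsetT cardsT card_ord card_in_imset ?(card_star v reg) ?leqnn //.
  move=> e e'; rewrite /star !inE => he he' eq; apply/eqP/negP => /negP ne.
  move: (proper _ _ eq); rewrite /line_graph ne /= negbK.
  by move=> /disjointFr/(_ he); rewrite he'.
have : f x \in f @: star v by rewrite himg inE.
case/imsetP => y; rewrite /star inE => hvy eq; exists y => //.
by rewrite memC eq.
Qed.

End S.

Theorem mainTheorem7 (V : finType) (adj : rel V) (k : nat) :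
  simple_graph adj -> 0 < #|V| -> 2 <= k ->
  triangle_free adj -> regular adj k ->
  let G := compl_graph (line_graph adj) in
  (localizable G <-> k_localizable G k) /\
  (k_localizable G k <-> chromatic_index adj = k).
Proof.
move=> sg hV hk tf reg G.
case/card_gt0P: hV => v0 _.
split; split.
- by case=> P hP; exists P; split => //; exact: (count_P sg tf v0 hk reg hP).
- by case=> P [hP _]; exists P.
- case=> P [hP hPk]; apply/(chrom_iff sg v0 reg).
  exact: (col_of_part sg tf v0 hk reg hP hPk).
- move/(chrom_iff sg v0 reg) => hc.
  case: (part_of_col sg tf v0 hk reg hc) => P hP; exists P; split => //.
  exact: (count_P sg tf v0 hk reg hP).
Qed.
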